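(* Let $d\ge1$, let $T>0$ be a finite random variable with $D\in\{1,\dots,d\}$, and let $\tilde T$ be a finite random variable with $0<\tilde T\le T$ and $\tilde D=D\,\mathbf 1\{\tilde T=T\}$. If the representativity property holds, i.e. $$P(T\le t,D=j\mid\tilde T>s)=P(T\le t,D=j\mid T>s)\quad\text{for all } t\ge0,\ s\in\mathcal J,\ j=1,\dots,d,$$ then the identifiability property holds, i.e. $\tilde H_j(t)=H_j(t)$ for all $t\in\mathcal J$ and $j=1,\dots,d$. The reverse implication does not hold: there exist such $(T,D,\tilde T,\tilde D)$ for which the identifiability property holds but the representativity property fails.
   Context: Functions of the event time: - $S(t)=P(T>t)$. - $F_j(t)=P(T\le t,D=j)$. - $H_j(t)=\int_{(0,t]}S(s-)^{-1}F_j(ds)$. Observed quantities: - $\tilde S(t)=P(\tilde T>t)$. - $\tilde F_j(t)=P(\tilde T\le t,\tilde D=j)$. - $\tilde H_j(t)=\int_{(0,t]}\tilde S(s-)^{-1}\tilde F_j(ds)$. - Division by $0$ occurs only on null sets of the integrator. - $\mathcal J=\{t\ge0:\tilde S(t)>0\}$. *)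

(* Defs.v *)
From HB Require Import structures.
From mathcomp Require Import all_boot all_order all_algebra.
From mathcomp Require Import all_classical all_reals all_analysis.
Set Implicit Arguments. Unset Strict Implicit. Unset Printing Implicit Defensive.
Import Order.TTheory GRing.Theory Num.Theory.
Import numFieldNormedType.Exports.
Local Open Scope classical_set_scope.
Local Open Scope ring_scope.

Section Defs.
Context {d0 : measure_display} {Omega : measurableType d0} {R : realType}.
Variable P : probability Omega R.

Definition surv (X : Omega -> R) (t : R) : R := fine (P [set w | t < X w]).

Definition surv_left (X : Omega -> R) (s : R) : R :=
  lim (surv X x @[x --> s^'-]).

Definition subdist (X : Omega -> R) (Y : Omega -> nat) (j : nat)
  : set R -> \bar R :=
  fun A => P (X @^-1` A `&` [set w | Y w = j]).

Definition subdf (X : Omega -> R) (Y : Omega -> nat) (j : nat) (t : R) : R :=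
  fine (P ([set w | X w <= t] `&` [set w | Y w = j])).

Definition cumhaz (X : Omega -> R) (Y : Omega -> nat) (j : nat) (t : R)
  : \bar R :=
  (\int[subdist X Y j]_(s in `]0%R, t]%classic) ((surv_left X s)^-1)%:E)%E.

Definition condprob (A B : set Omega) : R :=
  fine (P (A `&` B)) / fine (P B).

Definition obs_status (T Tt : Omega -> R) (D : Omega -> nat) : Omega -> nat :=
  fun w => if Tt w == T w then D w else 0%N.

Definition Jset (Tt : Omega -> R) : set R :=
  [set t | 0 <= t /\ 0 < surv Tt t].

Definition model (d : nat) (T Tt : Omega -> R) (D : Omega -> nat) : Prop :=
  [/\ measurable_fun setT T /\ measurable_fun setT Tt,
      (forall j : nat, measurable [set w | D w = j]),
      (forall w, 0 < T w), (forall w, (1 <= D w <= d)%N)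
    & (forall w, 0 < Tt w /\ Tt w <= T w)].

Definition representativity (d : nat) (T Tt : Omega -> R) (D : Omega -> nat)
  : Prop :=
  forall (t s : R) (j : nat), 0 <= t -> s \in Jset Tt -> (1 <= j <= d)%N ->
    condprob ([set w | T w <= t] `&` [set w | D w = j]) [set w | s < Tt w]
    = condprob ([set w | T w <= t] `&` [set w | D w = j]) [set w | s < T w].

Definition identifiability (d : nat) (T Tt : Omega -> R) (D : Omega -> nat)
  : Prop :=
  forall (t : R) (j : nat), t \in Jset Tt -> (1 <= j <= d)%N ->
    cumhaz Tt (obs_status T Tt D) j t = cumhaz T D j t.

End Defs.

(* Main.v *)
Require Import Defs.
From HB Require Import structures.
From mathcomp Require Import all_boot all_order all_algebra.
From mathcomp Require Import all_classical all_reals all_analysis.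
From mathcomp Require Import ring lra measurable_realfun.
Set Implicit Arguments. Unset Strict Implicit. Unset Printing Implicit Defensive.
Import Order.TTheory GRing.Theory Num.Theory.
Import numFieldNormedType.Exports.
Local Open Scope classical_set_scope.
Local Open Scope ring_scope.
Definition grid (R : realType) (t : R) (n k : nat) : R := k%:R * (t / n.+1%:R).

Section grid.
Context {R : realType} (t : R) (tpos : 0 < t) (n : nat).

Lemma h_gt0 : 0 < t / n.+1%:R.
Proof. by rewrite divr_gt0// ltr0n. Qed.

Lemma grid_le a b : (a <= b)%N -> grid t n a <= grid t n b.
Proof. by move=> ab; rewrite /grid ler_wpM2r ?ler_nat// ltW// h_gt0. Qed.

Lemma grid_lt a b : (a < b)%N -> grid t n a < grid t n b.
Proof. by move=> ab; rewrite /grid ltr_pM2r ?ltr_nat// h_gt0. Qed.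

Lemma grid0 : grid t n 0 = 0.
Proof. by rewrite /grid mul0r. Qed.

Lemma gridN : grid t n n.+1 = t.
Proof. by rewrite /grid mulrCA divff ?mulr1// pnatr_eq0. Qed.

Lemma grid_step k : grid t n k.+1 = grid t n k + t / n.+1%:R.
Proof. by rewrite /grid -addn1 natrD mulrDl mul1r. Qed.

Lemma grid_ge0 k : 0 <= grid t n k.
Proof. by have := grid_le (leq0n k); rewrite grid0. Qed.

Lemma grid_let k : (k <= n.+1)%N -> grid t n k <= t.
Proof. by move=> kn; have := grid_le kn; rewrite gridN. Qed.

Lemma grid_cell u : 0 < u <= t ->
  exists k, (k < n.+1)%N /\ grid t n k < u <= grid t n k.+1.
Proof.
move=> /andP[u0 ut].
have ex : exists m, u <= grid t n m.+1 by exists n; rewrite gridN.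
case: (ex_minnP ex) => m um mmin; exists m; split.
  by rewrite ltnS mmin// gridN.
rewrite um andbT; case: m um mmin => [|m] um mmin; first by rewrite grid0.
by rewrite ltNge; apply/negP => /mmin; rewrite ltnn.
Qed.

Lemma grid_uniq u k k' : grid t n k < u <= grid t n k.+1 ->
  grid t n k' < u <= grid t n k'.+1 -> k = k'.
Proof.
move=> /andP[a1 a2] /andP[b1 b2]; apply/eqP; rewrite eqn_leq; apply/andP; split.
  rewrite leqNgt; apply/negP => kk.
  by have := grid_le kk; rewrite leNgt (lt_le_trans a1 b2).
rewrite leqNgt; apply/negP => kk.
by have := grid_le kk; rewrite leNgt (lt_le_trans b1 a2).
Qed.

End grid.
Lemma left_cvg {R : realType} (c : R -> R) u :
  {homo c : x y / x <= y >-> y <= x} -> cvg (c x @[x --> u^'-]).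
Proof.
move=> hc; rewrite -is_cvgNE; apply: nondecreasing_at_left_is_cvgr.
  by near=> x => a b _ _ ab /=; rewrite lerN2; exact: hc.
near=> x; exists (- c u) => _ [y hy <-].
move: hy => /=; rewrite in_itv/= => /andP[_ yu].
by rewrite lerN2; apply: hc; exact: ltW.
Unshelve. all: by end_near. Qed.

Lemma cvg_tdiv {R : realType} (t : R) : (fun n : nat => t / n.+1%:R) @ \oo --> 0.
Proof.
have -> : (fun n : nat => t / n.+1%:R) = (fun n => t * harmonic n).
  by apply/funext => n.
have := cvgM (cvg_cst t) (@cvg_harmonic R); rewrite mulr0; exact.
Qed.

Section L1.
Context {R : realType} (mu : {measure set R -> \bar R}) (c : R -> R) (t : R).
Hypotheses (tpos : 0 < t) (mu1 : forall A, measurable A -> (mu A <= 1)%E)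
  (hc : {homo c : x y / x <= y >-> y <= x}) (ct : 0 < c t).

Let I n k : set R := `]grid t n k, grid t n k.+1]%classic.
Let Dm : set R := `]0, t]%classic.
Let L u := lim (c x @[x --> u^'-]).

Let Lcvg u : c x @[x --> u^'-] --> L u.
Proof. exact: left_cvg. Qed.

Let seq_cvg u (k : nat -> nat) : 0 < u <= t ->
  (forall n, grid t n (k n) < u <= grid t n (k n).+1) ->
  (fun n => c (grid t n (k n))) @ \oo --> L u /\ c t <= L u.
Proof.
move=> /andP[u0 ut] hk.
have au n : grid t n (k n) < u by have /andP[] := hk n.
have acvg : (fun n => grid t n (k n)) @ \oo --> u.
  apply: (@squeeze_cvgr _ _ _ _ (fun n => u - t / n.+1%:R) (fun n => u)).
  - near=> n; rewrite (ltW (au n)) andbT lerBlDr -grid_step.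
    by have /andP[] := hk n.
  - rewrite -[X in _ --> X]subr0; apply: cvgB; [exact: cvg_cst|exact: cvg_tdiv].
  - exact: cvg_cst.
have ccvg := (cvg_at_leftP c u (L u)).1 (@Lcvg u) _ (conj au acvg).
split => //; rewrite -(cvg_lim _ ccvg) //; apply: limr_ge.
  by apply/cvg_ex; exists (L u).
near=> n; apply: hc; apply: le_trans (ltW (au n)) ut.
Unshelve. all: by end_near. Qed.

Let f_ n (u : R) : \bar R := (\sum_(k < n.+1) ((c (grid t n k))^-1 * \1_(I n k) u)%:E)%E.
Let f (u : R) : \bar R := ((L u)^-1)%:E.
Let g : R -> \bar R := fun _ : R => ((c t)^-1)%:E.

Let fn_eq n u k0 : (k0 < n.+1)%N -> grid t n k0 < u <= grid t n k0.+1 ->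
  f_ n u = ((c (grid t n k0))^-1)%:E.
Proof.
move=> k0n hu; rewrite /f_ (bigD1 (Ordinal k0n)) //= big1 ?adde0.
  by rewrite indicE mem_set ?mulr1//; rewrite /I /= in_itv.
move=> i /eqP ik0; rewrite indicE memNset ?mulr0//; rewrite /I /= in_itv/= => hi.
by apply: ik0; apply/val_inj => /=; exact: (grid_uniq tpos hi hu).
Qed.

Let mDm : measurable Dm. Proof. exact: measurable_itv. Qed.

Let mf_ n : measurable_fun Dm (f_ n).
Proof.
apply: emeasurable_sum => k; apply/measurable_EFinP.
apply: (measurable_funM (f := cst ((c (grid t n k))^-1)) (g := \1_(I n k))).
  exact: measurable_cst.
by apply: measurable_indic; exact: measurable_itv.
Qed.

Let f_f u : Dm u -> f_ ^~ u @ \oo --> f u.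
Proof.
rewrite /Dm /= in_itv/= => hu.
have [k hk] := choice (fun n : nat => grid_cell n hu).
have hk' n : grid t n (k n) < u <= grid t n (k n).+1 by have [] := hk n.
have [cv Lge] := seq_cvg hu hk'.
have L0 : L u != 0 by rewrite gt_eqF// (lt_le_trans ct).
have := cvgV L0 cv => cv2.
have : (EFin \o (fun n => (c (grid t n (k n)))^-1)) @ \oo --> (((L u)^-1 : R))%:E.
  by apply: cvg_EFin; [exact: nearW | exact: cv2].
apply: cvg_trans; apply: near_eq_cvg; near=> n.
by rewrite (fn_eq (hk n).1 (hk' n)).
Unshelve. all: by end_near. Qed.

Let fing u : Dm u -> g u \is a fin_num. Proof. by []. Qed.

Let ig : mu.-integrable Dm g.
Proof.
apply/integrableP; split; first exact: measurable_cst.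
under eq_integral do rewrite /g gee0_abs ?lee_fin ?invr_ge0 ?(ltW ct)//.
rewrite integral_cst// lte_mul_pinfty ?lee_fin ?invr_ge0 ?(ltW ct)//.
by rewrite (le_lt_trans (mu1 mDm))// ltry.
Qed.

Let absfg n u : Dm u -> (`|f_ n u| <= g u)%E.
Proof.
rewrite /Dm /= in_itv/= => hu.
have [k [kn hk]] := grid_cell n hu.
rewrite (fn_eq kn hk) /g abse_EFin lee_fin.
have ck : c t <= c (grid t n k).
  by apply: hc; case/andP: hk => hk1 _; case/andP: hu => _ ut; exact: (le_trans (ltW hk1) ut).
rewrite ger0_norm ?invr_ge0 ?(le_trans (ltW ct))//.
by rewrite lef_pV2// posrE (lt_le_trans ct).
Qed.

Let Lge u : Dm u -> c t <= L u.
Proof.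
rewrite /Dm /= in_itv/= => hu.
have [k hk] := choice (fun n : nat => grid_cell n hu).
have hk' n : grid t n (k n) < u <= grid t n (k n).+1 by have [] := hk n.
by have [_ ?] := seq_cvg hu hk'.
Qed.

Let ak_ge0 n (k : 'I_n.+1) : 0 <= (c (grid t n k))^-1.
Proof.
rewrite invr_ge0 (le_trans (ltW ct))//; apply: hc.
by apply: grid_let => //; exact: ltnW.
Qed.

Let mu_fin A : measurable A -> mu A \is a fin_num.
Proof.
move=> mA; rewrite ge0_fin_numE ?measure_ge0//.
by rewrite (le_lt_trans (mu1 mA))// ltry.
Qed.

Lemma L1_main : exists r : R,
  (\int[mu]_(u in Dm) f u = r%:E)%E /\
  (fun n => \sum_(k < n.+1) (c (grid t n k))^-1 * fine (mu (I n k))) @ \oo --> r.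
Proof.
have mf : measurable_fun Dm f := emeasurable_fun_cvg _ _ mf_ f_f.
have f0 u : Dm u -> (0 <= f u)%E.
  move=> Du; rewrite lee_fin invr_ge0.
  by rewrite (le_trans (ltW ct))// Lge.
have fg u : Dm u -> (f u <= g u)%E.
  move=> Du; rewrite lee_fin lef_pV2// ?Lge// posrE (lt_le_trans ct)// Lge//.
have fin : (\int[mu]_(u in Dm) f u)%E \is a fin_num.
  rewrite ge0_fin_numE ?integral_ge0//.
  apply: (le_lt_trans (ge0_le_integral mu mDm f0 mf (measurable_cst _) fg)).
  rewrite integral_cst// lte_mul_pinfty ?lee_fin ?invr_ge0 ?(ltW ct)//.
  by rewrite (le_lt_trans (mu1 mDm))// ltry.
exists (fine (\int[mu]_(u in Dm) f u)); split; first by rewrite fineK.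
have := dominated_cvg mDm mf_ f_f fing ig absfg; rewrite -(fineK fin).
move=> /fine_cvg; apply: cvg_trans; apply: near_eq_cvg; near=> n => /=.
rewrite /f_ ge0_integral_sum//; last first.
  - by move=> k u _; rewrite lee_fin mulr_ge0 ?indic_ge0.
  - move=> k; apply/measurable_EFinP.
    apply: (measurable_funM (f := cst ((c (grid t n k))^-1)) (g := \1_(I n k))).
      exact: measurable_cst.
    by apply: measurable_indic; exact: measurable_itv.
have hI (k : 'I_n.+1) : I n k `&` Dm = I n k.
  apply/setIidl => x; rewrite /I /Dm /= !in_itv/= => /andP[a b].
  rewrite (le_lt_trans (grid_ge0 tpos n k) a)/=.
  by rewrite (le_trans b)// grid_let.
rewrite (eq_bigr (fun k : 'I_n.+1 => ((c (grid t n k))^-1 * fine (mu (I n k)))%:E)); last first.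
  move=> k _; rewrite (integralZl_indic mDm (fun _ => I n k)).
  - by rewrite integral_indic ?hI ?EFinM ?fineK ?mu_fin//; exact: measurable_itv.
  - by move=> h; exfalso; move: h; rewrite ltNge ak_ge0.
  - exact: measurable_itv.
by rewrite sumEFin.
Unshelve. all: by end_near. Qed.

End L1.
Lemma subdist_measure d0 (Omega : measurableType d0) (R : realType)
  (P : probability Omega R) (X : Omega -> R) (Y : Omega -> nat) (j : nat) :
  measurable_fun setT X -> measurable [set w | Y w = j] ->
  exists mu : {measure set R -> \bar R}, forall A, mu A = subdist P X Y j A.
Proof.
move=> mX mY.
pose mu := (pushforward (mrestr P mY) X : {measure set R -> \bar R}).
by exists (mu mX).
Qed.

Lemma mbool d (T : measurableType d) (b : T -> bool) :
  measurable_fun setT b -> measurable [set w | b w].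
Proof.
move=> mb; rewrite -[X in measurable X]setTI; exact: (mb measurableT [set true]).
Qed.

Section part1.
Context {d0 : measure_display} {Omega : measurableType d0} {R : realType}
  (P : probability Omega R) (d : nat) (T Tt : Omega -> R) (D : Omega -> nat).
Hypotheses (hm : model d T Tt D) (hrep : representativity P d T Tt D).

Let mT : measurable_fun setT T. Proof. by case: hm => -[]. Qed.
Let mTt : measurable_fun setT Tt. Proof. by case: hm => -[]. Qed.
Let mD j : measurable [set w | D w = j]. Proof. by case: hm. Qed.
Let TtT w : Tt w <= T w. Proof. by case: hm => _ _ _ _ /(_ w) []. Qed.

Let mlt (X : Omega -> R) a : measurable_fun setT X -> measurable [set w | a < X w].
Proof. by move=> mX; apply: mbool; apply: measurable_fun_ltr. Qed.
Let mle (X : Omega -> R) a : measurable_fun setT X -> measurable [set w | X w <= a].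
Proof. by move=> mX; apply: mbool; apply: measurable_fun_ler. Qed.
Let mpre (X : Omega -> R) A : measurable_fun setT X -> measurable A ->
  measurable (X @^-1` A).
Proof. by move=> mX mA; rewrite -[X in measurable X]setTI; exact: mX. Qed.

Let Pfin A : measurable A -> P A \is a fin_num.
Proof.
move=> mA; rewrite ge0_fin_numE ?measure_ge0//.
by rewrite (le_lt_trans (probability_le1 P mA))// ltry.
Qed.

Let surv_noninc X : measurable_fun setT X -> {homo surv P X : x y / x <= y >-> y <= x}.
Proof.
move=> mX x y xy; have m1 := mlt y mX; have m2 := mlt x mX.
rewrite /surv fine_le ?Pfin//; apply: le_measure; rewrite ?inE// => w /=.
exact: le_lt_trans.
Qed.

Let StS x : surv P Tt x <= surv P T x.
Proof.
have m1 := mlt x mTt; have m2 := mlt x mT.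
rewrite /surv fine_le ?Pfin//; apply: le_measure; rewrite ?inE// => w /= xw.
exact: lt_le_trans xw (TtT w).
Qed.

Lemma part1 : identifiability P d T Tt D.
Proof.
move=> t j /set_mem [t0 Stt] hj.
have j0 : j != 0%N by case: j hj.
have mobs : measurable [set w | obs_status T Tt D w = j].
  have -> : [set w | obs_status T Tt D w = j] = [set w | Tt w == T w] `&` [set w | D w = j].
    apply/seteqP; split => w /=; rewrite /obs_status.
      by case: ifP => // _ Dw; subst j; rewrite eqxx in j0.
    by case=> -> ->.
  apply: measurableI => //; apply: mbool; exact: measurable_fun_eqr.
have [muT muTE] := subdist_measure P mT (mD j).
have [muTt muTtE] := subdist_measure P mTt mobs.
rewrite /cumhaz.
have -> : subdist P T D j = muT by apply/funext => A; rewrite muTE.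
have -> : subdist P Tt (obs_status T Tt D) j = muTt by apply/funext => A; rewrite muTtE.
have [->|tne0] := eqVneq t 0.
  have -> : `]0%R, 0%R]%classic = set0 :> set R.
    by apply/seteqP; split => x //=; rewrite in_itv/= => /andP[a b]; move: (lt_le_trans a b); rewrite ltxx.
  by rewrite !integral_set0.
have tpos : 0 < t by rewrite lt_neqAle eq_sym tne0.
have muT1 A : measurable A -> (muT A <= 1)%E.
  move=> mA; rewrite muTE; apply: probability_le1; apply: measurableI => //; exact: mpre.
have muTt1 A : measurable A -> (muTt A <= 1)%E.
  move=> mA; rewrite muTtE; apply: probability_le1; apply: measurableI => //; exact: mpre.
have St0 : 0 < surv P T t by exact: lt_le_trans Stt (StS t).
have [rA [eA cvA]] := L1_main tpos muT1 (surv_noninc mT) St0.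
have [rB [eB cvB]] := L1_main tpos muTt1 (surv_noninc mTt) Stt.
rewrite /surv_left eA eB; congr (_%:E).
pose I n k : set R := `]grid t n k, grid t n k.+1]%classic.
pose A n := \sum_(k < n.+1) (surv P T (grid t n k))^-1 * fine (muT (I n k)).
pose B n := \sum_(k < n.+1) (surv P Tt (grid t n k))^-1 * fine (muTt (I n k)).
have cvA' : A n @[n --> \oo] --> rA := cvA.
have cvB' : B n @[n --> \oo] --> rB := cvB.
pose E1 n k := ([set w | T w <= grid t n k.+1] `&` [set w | D w = j]) `&` [set w | grid t n k < Tt w].
pose E2 n k := Tt @^-1` I n k `&` [set w | obs_status T Tt D w = j].
pose C n k := E1 n k `\` E2 n k.
pose G n := (fun w => T w - Tt w) @^-1` `]0, t / n.+1%:R[%classic.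
have mE1 n k : measurable (E1 n k).
  by apply: measurableI; [apply: measurableI => //; exact: mle|exact: mlt].
have mE2 n k : measurable (E2 n k).
  by apply: measurableI => //; apply: mpre => //; exact: measurable_itv.
have mC n k : measurable (C n k) by apply: measurableD.
have mG n : measurable (G n).
  by apply: mpre; [exact: measurable_funB|exact: measurable_itv].
have Plty X : measurable X -> (P X < +oo)%E.
  by move=> mX; rewrite (le_lt_trans (probability_le1 P mX))// ltry.
have E21 n k : E2 n k `<=` E1 n k.
  move=> w [/= hI ho]; move: hI; rewrite /I /= in_itv/= => /andP[a b].
  move: ho; rewrite /obs_status; case: ifPn => [/eqP e Dw|_ Dw]; last by move: j0; rewrite -Dw.
  by split => //=; split => //=; rewrite -e.
have Stpos : forall n (k : 'I_n.+1), surv P Tt t <= surv P Tt (grid t n k).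
  move=> n k; apply: surv_noninc => //; apply: grid_let => //; exact: ltnW.
have term : forall n (k : 'I_n.+1),
    (surv P T (grid t n k))^-1 * fine (muT (I n k))
  - (surv P Tt (grid t n k))^-1 * fine (muTt (I n k))
  = fine (P (C n k)) / surv P Tt (grid t n k).
  move=> n k; have a0 := grid_ge0 tpos n k.
  have b0 := grid_ge0 tpos n k.+1.
  have aJ : grid t n k \in Jset P Tt.
    by apply: mem_set; split => //; exact: lt_le_trans Stt (Stpos n k).
  have := hrep b0 aJ hj; rewrite /condprob => hr.
  have -> : muT (I n k) = P (([set w | T w <= grid t n k.+1] `&` [set w | D w = j])
     `&` [set w | grid t n k < T w]).
    rewrite muTE /subdist; congr (P _); apply/seteqP; split => w /=.
      by rewrite /I /= in_itv/= => -[/andP[a b] e]; do !split.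
    by move=> [[b e] a]; rewrite /I /= in_itv/= a b.
  rewrite [X in X - _]mulrC -hr muTtE /subdist.
  rewrite -[fine (P [set w | grid t n k < Tt w])]/(surv P Tt (grid t n k)).
  rewrite [X in _ - X]mulrC -mulrBl; congr (_ / _).
  by rewrite /C measureD ?Plty// (setIidr (E21 n k)) fineB ?Pfin.
have AB n : A n - B n = \sum_(k < n.+1) fine (P (C n k)) / surv P Tt (grid t n k).
  by rewrite /A /B -sumrB; apply: eq_bigr => k _; rewrite term.
have triv n : trivIset setT (C n).
  move=> k k' _ _ [w [[[[Tb De] aTt] _] [[[Tb' De'] aTt'] _]]].
  apply: (@grid_uniq _ t tpos n (T w)).
    by rewrite Tb andbT (lt_le_trans aTt (TtT w)).
  by rewrite Tb' andbT (lt_le_trans aTt' (TtT w)).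
have CG n k : C n k `<=` G n.
  move=> w [[[Tb De] aTt] nE2]; rewrite /G /= in_itv/=.
  have TtT' : Tt w < T w.
    rewrite lt_neqAle TtT andbT; apply/negP => /eqP e; apply: nE2; split.
      by rewrite /I /= in_itv/= aTt e.
    by rewrite /= /obs_status e eqxx.
  rewrite subr_gt0 TtT'/=.
  rewrite ltrBlDr (le_lt_trans Tb)// grid_step//; by rewrite [ltRHS]addrC ltrD2r.
have bnd n : 0 <= A n - B n <= fine (P (G n)) * (surv P Tt t)^-1.
  rewrite AB; apply/andP; split.
    by apply: sumr_ge0 => k _; rewrite divr_ge0 ?fine_ge0 ?measure_ge0.
  apply: (@le_trans _ _ (\sum_(k < n.+1) fine (P (C n k)) * (surv P Tt t)^-1)).
    apply: ler_sum => k _; rewrite ler_wpM2l ?fine_ge0 ?measure_ge0//.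
    by rewrite lef_pV2 ?posrE ?Stpos// (lt_le_trans Stt (Stpos n k)).
  rewrite -mulr_suml ler_wpM2r ?invr_ge0 ?(ltW Stt)//.
  have -> : \sum_(k < n.+1) fine (P (C n k)) = fine (P (\big[setU/set0]_(k < n.+1) C n k)).
    rewrite measure_bigsetU//.
    rewrite -[LHS]/(fine ((\sum_(k < n.+1) fine (P (C n k)))%:E)) -sumEFin.
    by congr fine; apply: eq_bigr => k _; rewrite fineK// Pfin.
  rewrite fine_le ?Pfin//; first exact: bigsetU_measurable.
  apply: le_measure; rewrite ?inE//; first exact: bigsetU_measurable.
  by apply: (big_ind (fun X => X `<=` G n)) => // X Y hX hY w [/hX|/hY].
have G0 : \bigcap_n G n = set0.
  apply/seteqP; split => // w /= hw.
  have := hw 0%N Logic.I; rewrite /G /= in_itv/= => /andP[dpos _].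
  have := hw (Num.Def.trunc (t / (T w - Tt w))) Logic.I; rewrite /G /= in_itv/= => /andP[_].
  rewrite ltr_pdivlMr ?ltr0n// => h1.
  have := truncnS_gt (t / (T w - Tt w)); rewrite ltr_pdivrMr// => h2.
  by move: (lt_trans h1 h2); rewrite mulrC ltxx.
have PG : (fun n => fine (P (G n))) @ \oo --> 0.
  have := @nonincreasing_cvg_mu _ _ _ P G (Plty _ (mG 0%N)) mG.
  rewrite G0 measure0 => /(_ measurable0) h.
  apply: (fine_cvg (f := P \o G)); apply: h => m n mn; rewrite subsetEset.
  move=> w; rewrite /G /= !in_itv/= => /andP[-> h] /=.
  apply: (lt_le_trans h); rewrite ler_wpM2l ?(ltW tpos)// lef_pV2 ?posrE ?ltr0n//.
  by rewrite ler_nat.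
have hD : (fun n => A n - B n) @ \oo --> 0.
  apply: (@squeeze_cvgr _ _ _ _ (fun=> 0) (fun n => fine (P (G n)) * (surv P Tt t)^-1)).
  - exact: nearW.
  - exact: cvg_cst.
  - have := cvgM PG (cvg_cst ((surv P Tt t)^-1)); rewrite mul0r; exact.
have cvB3 : B n @[n --> \oo] --> rA.
  have -> : B = (fun n => A n - (A n - B n)).
    by apply/funext => n; rewrite opprB addrC subrK.
  rewrite -[X in _ --> X]subr0; exact: (cvgB cvA' hD).
first [exact: (cvg_unique _ cvB' cvB3) | exact: (cvg_unique cvB' cvB3) | exact: cvg_unique cvB' cvB3].
Unshelve. all: by end_near. Qed.

End part1.
Lemma surv_nonincG d0 (Omega : measurableType d0) (R : realType)
  (P : probability Omega R) (X : Omega -> R) :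
  measurable_fun setT X -> {homo surv P X : x y / x <= y >-> y <= x}.
Proof.
move=> mX x y xy.
have mlt a : measurable [set w | a < X w].
  by apply: mbool; apply: measurable_fun_ltr.
have Pfin A : measurable A -> P A \is a fin_num.
  move=> mA; rewrite ge0_fin_numE ?measure_ge0//.
  by rewrite (le_lt_trans (probability_le1 P mA))// ltry.
rewrite /surv fine_le ?Pfin//; apply: le_measure; rewrite ?inE// => w /=.
exact: le_lt_trans.
Qed.

Section part2.
Context {R : realType} (d : nat) (hd : (1 <= d)%N).
Let P := bernoulli_prob (1/2 : R).
Let T (b : bool) : R := if b then 2 else 3.
Let Tt (b : bool) : R := if b then 1 else 2.
Let D (b : bool) : nat := 1%N.

Let p01 : 0 <= (1/2 : R) <= 1. Proof. by apply/andP; split; lra. Qed.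

Let PA (A : set bool) :
  bernoulli_prob (1/2 : R) A = ((1/2) * (true \in A)%:R + (1/2) * (false \in A)%:R)%:E.
Proof.
rewrite bernoulli_probE// !diracE -!EFinM -EFinD.
by congr (_%:E); rewrite /unstable.onem; congr (_ + _ * _); lra.
Qed.

Let mfun (f : bool -> R) : measurable_fun setT f. Proof. by []. Qed.

Lemma ex_model : model d T Tt D.
Proof.
split.
- by split; exact: mfun.
- by [].
- by case => /=; lra.
- by move=> w; rewrite /D.
- by case => /=; split; lra.
Qed.

Lemma ex_nrep : ~ representativity P d T Tt D.
Proof.
move=> hr.
have hJ : (3/2 : R) \in Jset P Tt.
  apply: mem_set; split; first lra.
  rewrite /surv /P /= PA memNset /=; last lra.
  by rewrite mem_set /=; [rewrite mulr0 add0r mulr1; lra|lra].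
have := hr 2 (3/2) 1%N ltac:(lra) hJ hd; rewrite /condprob.
rewrite /P /= !PA /=.
rewrite (memNset (u := true)) /=; last by move=> [_ h]; lra.
rewrite (memNset (u := false)) /=; last by move=> [[h _] _]; lra.
rewrite (memNset (u := true)) /=; last by move=> h; lra.
rewrite (mem_set (u := false)) /=; last lra.
rewrite (mem_set (u := true)) /=; last by split; [split; [lra|by []]|lra].
rewrite (memNset (u := false)) /=; last by move=> [[h _] _]; lra.
rewrite (mem_set (u := true)) /=; last lra.
rewrite (mem_set (u := false)) /=; last lra.
rewrite !mulr0 !mulr1 !addr0 !add0r mul0r => h.
have : (1/2 : R) / (1/2 + 1/2) = 0 by rewrite -h.
rewrite (_ : (1/2 + 1/2 : R) = 1); last lra.
rewrite divr1; lra.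
Qed.

Lemma ex_ident : identifiability P d T Tt D.
Proof.
move=> t j /set_mem [t0 Stt] hj.
have j0 : j != 0%N by case: j hj.
have t2 : t < 2.
  rewrite ltNge; apply/negP => t2; move: Stt.
  rewrite /surv (_ : [set w | t < Tt w] = set0) ?measure0 ?ltxx//.
  by apply/seteqP; split => // -[] /= h; lra.
have [muT muTE] := subdist_measure P (mfun T) (ltac:(by []) : measurable [set w | D w = j]).
have [muTt muTtE] := subdist_measure P (mfun Tt)
  (ltac:(by []) : measurable [set w | obs_status T Tt D w = j]).
rewrite /cumhaz.
have -> : subdist P T D j = muT by apply/funext => A; rewrite muTE.
have -> : subdist P Tt (obs_status T Tt D) j = muTt by apply/funext => A; rewrite muTtE.
have [->|tne0] := eqVneq t 0.
  have -> : `]0%R, 0%R]%classic = set0 :> set R.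
    by apply/seteqP; split => x //=; rewrite in_itv/= => /andP[a b]; move: (lt_le_trans a b); rewrite ltxx.
  by rewrite !integral_set0.
have tpos : 0 < t by rewrite lt_neqAle eq_sym tne0.
have muT1 A : measurable A -> (muT A <= 1)%E.
  by move=> mA; rewrite muTE; apply: probability_le1.
have muTt1 A : measurable A -> (muTt A <= 1)%E.
  by move=> mA; rewrite muTtE; apply: probability_le1.
have St0 : 0 < surv P T t.
  rewrite /surv (_ : [set w | t < T w] = setT) ?probability_setT//.
  by apply/seteqP; split => // -[] _ /=; lra.
have [rA [eA cvA]] := L1_main tpos muT1 (surv_nonincG P (mfun T)) St0.
have [rB [eB cvB]] := L1_main tpos muTt1 (surv_nonincG P (mfun Tt)) Stt.
rewrite /surv_left eA eB; congr (_%:E).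
have zero (mu : {measure set R -> \bar R}) (c : R -> R) :
    (forall n k, (k < n.+1)%N -> mu `]grid t n k, grid t n k.+1]%classic = 0%E) ->
    forall r, (fun n => \sum_(k < n.+1) (c (grid t n k))^-1 *
       fine (mu `]grid t n k, grid t n k.+1]%classic)) @ \oo --> r -> r = 0.
  move=> h0 r hr.
  have e : (fun n => \sum_(k < n.+1) (c (grid t n k))^-1 *
       fine (mu `]grid t n k, grid t n k.+1]%classic)) = fun=> 0.
    by apply/funext => n; apply: big1 => k _; rewrite h0// mulr0.
  have h1 : (fun n => \sum_(k < n.+1) (c (grid t n k))^-1 *
       fine (mu `]grid t n k, grid t n k.+1]%classic)) @ \oo --> (0:R).
    by rewrite e; exact: cvg_cst.
  first [exact: (cvg_unique _ hr h1) | exact: (cvg_unique hr h1)].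
rewrite (zero _ _ _ rB cvB) ?(zero _ _ _ rA cvA)//.
- move=> n k kn; rewrite muTE /subdist (_ : _ `&` _ = set0) ?measure0//.
  apply/seteqP; split => // w [/=]; rewrite in_itv/= => /andP[_ h] _.
  have := grid_let tpos kn; move: h; case: w => /=; lra.
- move=> n k kn; rewrite muTtE /subdist (_ : _ `&` _ = set0) ?measure0//.
  apply/seteqP; split => // w [_ /=]; rewrite /obs_status; case: w => /=.
    by case: eqP => [e _|_ h]; [lra|move: j0; rewrite -h].
  by case: eqP => [e _|_ h]; [lra|move: j0; rewrite -h].
Qed.

End part2.

Theorem proposition4 (R : realType) (d : nat) (hd : (1 <= d)%N) :
  (forall (d0 : measure_display) (Omega : measurableType d0)
          (P : probability Omega R) (T Tt : Omega -> R) (D : Omega -> nat),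
      model d T Tt D ->
      representativity P d T Tt D -> identifiability P d T Tt D)
  /\
  (exists (d0 : measure_display) (Omega : measurableType d0)
          (P : probability Omega R) (T Tt : Omega -> R) (D : Omega -> nat),
      [/\ model d T Tt D, identifiability P d T Tt D
        & ~ representativity P d T Tt D]).
Proof.
split.
  by move=> d0 Omega P T Tt D hm hrep; apply: part1.
exists _, bool, (bernoulli_prob (1/2 : R)), (fun b : bool => if b then 2 else 3 : R),
  (fun b : bool => if b then 1 else 2 : R), (fun=> 1%N).
split; [exact: ex_model hd | exact: ex_ident | exact: ex_nrep hd].
Qed.
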